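(* For a function $f:\mathbb{R}\to\mathbb{R}$, $V>0$ and $p\in(0,\infty)$ define $$\|f\|_{p,V}:=\sup\Big\{\Big(\frac{1}{|\Omega|}\int_{\Omega}|f(x)|^{p}\,dx\Big)^{1/p} : \Omega\subset\mathbb{R} \text{ open and convex},\ |\Omega|=V\Big\},$$ and let $L^p_V:=\{f\mid \|f\|_{p,V}<\infty\}$ modulo functions vanishing almost everywhere. Let $p\in[1,\infty)$ and $T,S>0$ with $T<S$ such that $S/T\notin\mathbb{N}$. Then there exist $f,g\in L^p_T$ such that $$\|f\|_{p,T}<\|f\|_{p,S}\quad\text{and}\quad\|g\|_{p,S}<\|g\|_{p,T}.$$
   Context: $|\Omega|$ denotes Lebesgue measure; open convex subsets of $\mathbb{R}$ are open intervals; functions are measurable. *)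

(* Defs.v *)
From HB Require Import structures.
From mathcomp Require Import all_boot all_order all_algebra.
From mathcomp Require Import all_classical all_reals all_analysis.
Set Implicit Arguments. Unset Strict Implicit. Unset Printing Implicit Defensive.
Import Order.TTheory GRing.Theory Num.Theory.
Import numFieldNormedType.Exports.
Local Open Scope classical_set_scope.
Local Open Scope ring_scope.

Definition convex_setR (R : realType) (A : set R) : Prop :=
  forall x y z : R, A x -> A y -> x <= z -> z <= y -> A z.

Definition normpV (R : realType) (p V : R) (f : R -> R) : \bar R :=
  ereal_sup [set ((fine (lebesgue_measure O))^-1%:E *
                  \int[lebesgue_measure]_(x in O) (`|f x| `^ p)%:E) `^ p^-1
            | O in [set O : set R | @open (R : realType) O /\ convex_setR O /\
                                    lebesgue_measure O = V%:E]]%E.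

(* Main.v *)
Require Import Defs.
From HB Require Import structures.
From mathcomp Require Import all_boot all_order all_algebra.
From mathcomp Require Import all_classical all_reals all_analysis.
From mathcomp Require Import measurable_realfun lra ring.
Import Order.TTheory GRing.Theory Num.Theory.
Import numFieldNormedType.Exports.
Local Open Scope classical_set_scope.
Local Open Scope ring_scope.

Section S.
Variable R : realType.
Local Notation mu := (@lebesgue_measure R).

Definition adm (V : R) (O : set R) := open O /\ convex_setR O /\ mu O = V%:E.

Lemma diam V O x y : convex_setR O -> measurable O -> mu O = V%:E -> O x -> O y -> x <= y -> y - x <= V.
Proof.
move=> cO mO muO Ox Oy xy.
have sub : `[x, y]%classic `<=` O by move=> z /=; rewrite in_itv /= => /andP[a b]; exact: (cO x y).
have H : (mu `[x, y]%classic <= mu O)%E.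
  by apply: le_measure => //; rewrite inE //; exact: measurable_itv.
move: H; rewrite muO.
rewrite (lebesgue_measure_itv `[x, y]) /= lte_fin.
have [xy'|yx] := ltP x y; last first.
  move=> _; have V0 : (0 <= V%:E)%E by rewrite -muO; exact: measure_ge0.
  by rewrite (le_anti ((introT andP (conj xy yx)))) subrr -lee_fin.
by rewrite -EFinD lee_fin.
Qed.

Lemma term_indic p V (E : set R) O : 0 < p -> measurable E -> adm V O ->
  ((fine (mu O))^-1%:E * \int[mu]_(x in O) (`|(\1_E : R -> R) x| `^ p)%:E)%E
  = (V^-1%:E * mu (E `&` O))%E.
Proof.
move=> p0 mE [oO [cO muO]]; rewrite muO /=; congr (_ * _)%E.
rewrite -integral_indic //; last exact: open_measurable.
apply: eq_integral => x _; rewrite indicE; case: (x \in E) => /=.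
  by rewrite normr1 powR1.
by rewrite normr0 powR0 // gt_eqF.
Qed.

Lemma ub_indic p V c (E : set R) : 0 < p -> measurable E -> 0 < V -> 0 <= c ->
  (forall O, adm V O -> (mu (E `&` O) <= c%:E)%E) ->
  (normpV p V (\1_E) <= ((V^-1 * c)%:E) `^ p^-1)%E.
Proof.
move=> p0 mE V0 c0 H; apply: ge_ereal_sup.
move=> _ [U aU <-].
rewrite (@term_indic p V E U) //; apply: gt0_ler_poweR.
- by rewrite invr_ge0 ltW.
- rewrite in_itv /= leey andbT; apply: mule_ge0; first by rewrite lee_fin invr_ge0 ltW.
  exact: measure_ge0.
- by rewrite in_itv /= leey andbT lee_fin mulr_ge0 // invr_ge0 ltW.
- by rewrite EFinM; apply: lee_wpmul2l; [rewrite lee_fin invr_ge0 ltW|exact: H].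
Qed.

Lemma lb_indic p V c (E : set R) O : 0 < p -> measurable E -> adm V O ->
  mu (E `&` O) = c%:E ->
  (((V^-1 * c)%:E) `^ p^-1 <= normpV p V (\1_E))%E.
Proof.
move=> p0 mE aO H; apply: ereal_sup_ubound; exists O => //.
by rewrite (@term_indic p V E O) // H EFinM.
Qed.

Lemma adm_oo a b : a < b -> adm (b - a) `]a, b[%classic.
Proof.
move=> ab; split; first exact: interval_open.
split.
  move=> x y z /=; rewrite !in_itv /= => /andP[ax _] /andP[_ yb] xz zy.
  by apply/andP; split; [exact: lt_le_trans ax xz|exact: le_lt_trans zy yb].
by rewrite lebesgue_measure_itv /= lte_fin ab -EFinD.
Qed.

Lemma powlt (a b q : R) : 0 <= a -> a < b -> 0 < q -> (a%:E `^ q < b%:E `^ q)%E.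
Proof.
move=> a0 ab q0; rewrite !poweR_EFin lte_fin; apply: gt0_ltr_powR => //; rewrite nnegrE //.
exact: (le_trans a0 (ltW ab)).
Qed.

Lemma muE0T (T : R) : 0 < T -> mu `[0, T]%classic = T%:E.
Proof. by move=> T0; rewrite lebesgue_measure_itv /= lte_fin T0 -EFinD subr0. Qed.

Lemma g_part (p T S : R) : 0 < p -> 0 < T -> T < S ->
  let E := `[0, T]%classic in
  (normpV p T (\1_E) < +oo)%E /\ (normpV p S (\1_E) < normpV p T (\1_E))%E.
Proof.
move=> p0 T0 TS E.
have mE : measurable E by exact: measurable_itv.
have S0 : 0 < S by exact: lt_trans TS.
have lb : (1 <= normpV p T (\1_E))%E.
  have := @lb_indic p T T E `]0, T[%classic p0 mE.
  rewrite mulVf ?gt_eqF // poweR1r; apply; first by have := @adm_oo 0 T T0; rewrite subr0.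
  rewrite setIidr; last by move=> x; rewrite /E /= !in_itv /= => /andP[a b]; rewrite (ltW a) (ltW b).
  by rewrite lebesgue_measure_itv /= lte_fin T0 -EFinD subr0.
have ubT : (normpV p T (\1_E) <= 1)%E.
  have := @ub_indic p T T E p0 mE T0 (ltW T0).
  rewrite mulVf ?gt_eqF // poweR1r; apply => O [oO [cO mO]].
  rewrite -mO; apply: le_measure; rewrite ?inE //; first exact: measurableI (open_measurable oO).
    exact: open_measurable.
have ubS : (normpV p S (\1_E) <= (S^-1 * T)%:E `^ p^-1)%E.
  apply: (@ub_indic p S T E p0 mE S0 (ltW T0)) => O [oO [cO mO]].
  rewrite -(@muE0T T T0); apply: le_measure; rewrite ?inE //; first exact: measurableI (open_measurable oO).
split; first by apply: le_lt_trans ubT _; rewrite ltry.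
apply: le_lt_trans ubS _; apply: lt_le_trans lb.
rewrite -(poweR1r p^-1); apply: powlt.
- by rewrite mulr_ge0 // ?invr_ge0 ltW.
- by rewrite ltr_pdivrMl // mulr1.
- by rewrite invr_gt0.
Qed.

Lemma f_part (p T S : R) (k : nat) : 0 < p -> 0 < T ->
  k%:R * T < S -> S < k.+1%:R * T ->
  exists E : set R, measurable E /\
  (normpV p T (\1_E) < +oo)%E /\ (normpV p T (\1_E) < normpV p S (\1_E))%E.
Proof.
move=> p0 T0 kS Sk.
set r := S - k%:R * T.
have r0 : 0 < r by rewrite subr_gt0.
set e := r / (2 * (k%:R + 2)).
have k0 : 0 <= (k%:R : R) by [].
have e0 : 0 < e by rewrite divr_gt0 // mulr_gt0 // ltr_wpDl.
have ee : e * (2 * (k%:R + 2)) = r by rewrite /e mulfVK // gt_eqF // mulr_gt0 // ltr_wpDl.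
set d := T + 2 * e.
pose B (i : nat) := `[i%:R * d + e, i%:R * d + 2 * e]%classic.
pose E := \bigcup_(i < k.+1) B i.
have mB i : measurable (B i) by exact: measurable_itv.
have mE : measurable E by apply: bigcup_measurable => i _.
have muB i : mu (B i) = e%:E.
  rewrite lebesgue_measure_itv /= lte_fin ltrD2l ltr_pMl // ?ltr1n //.
  by rewrite -EFinD; congr (_%:E); lra.
have far i j x y : (i < j)%N -> B i x -> B j y -> T < y - x.
  move=> ij; rewrite /B /= !in_itv /= => /andP[x1 x2] /andP[y1 y2].
  have ij' : (i%:R + 1 <= j%:R :> R) by rewrite -[1]/(1%:R) -natrD ler_nat addn1.
  have d0 : 0 < d by rewrite /d; lra.
  have : (i%:R + 1) * d <= j%:R * d by rewrite ler_pM2r.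
  have dd : d = T + 2 * e by [].
  rewrite mulrDl mul1r; move: x1 x2 y1 y2; clearbody d; lra.
exists E; split => //.
have ub : (normpV p T (\1_E) <= (T^-1 * e)%:E `^ p^-1)%E.
  apply: (@ub_indic p T e E p0 mE T0 (ltW e0)) => O [oO [cO mO]].
  have mOm := open_measurable oO.
  case: (pselect (exists x, (E `&` O) x)) => [[x0 [[i _ Bx0] Ox0]]|nx]; last first.
    rewrite (_ : E `&` O = set0) ?measure0 ?lee_fin ?ltW //.
    by apply/seteqP; split => // x Hx; exfalso; apply: nx; exists x.
  rewrite -(muB i); apply: le_measure; [rewrite inE; exact: measurableI|rewrite inE; exact: mB|].
  move=> y [[j _ Byj] Oy].
  have [ij|ji|eij] := ltngtP i j; last by rewrite eij.
    have := far _ _ _ _ ij Bx0 Byj => H.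
    have hxy : x0 <= y by lra.
    have := @diam T O x0 y cO mOm mO Ox0 Oy hxy.
    lra.
  have := far _ _ _ _ ji Byj Bx0 => H.
  have hxy : y <= x0 by lra.
  have := @diam T O y x0 cO mOm mO Oy Ox0 hxy.
  lra.
split; first by apply: le_lt_trans ub _; apply: poweR_lty; rewrite ltry.
apply: le_lt_trans ub _.
have sub : E `<=` `]0, S[%classic.
  move=> x [i /= ik]; rewrite /B /= !in_itv /= => /andP[x1 x2].
  have ik' : (i%:R <= k%:R :> R) by rewrite ler_nat -ltnS.
  have d0 : 0 < d by rewrite /d; lra.
  have id0 : 0 <= i%:R * d by rewrite mulr_ge0 // ltW.
  apply/andP; split; first lra.
  have : i%:R * d <= k%:R * d by rewrite ler_pM2r.
  have kd : k%:R * d = k%:R * T + 2 * (k%:R * e) by rewrite /d mulrDr mulrCA.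
  have ee' : 2 * (k%:R * e) + 4 * e = r by rewrite -ee; ring.
  have rr : r = S - k%:R * T by [].
  move: x1 x2 kd ee' rr e0; clearbody d r e; lra.
have S0 : 0 < S by apply: le_lt_trans kS; rewrite mulr_ge0 // ltW.
have aO : adm S `]0, S[%classic by have := @adm_oo 0 S S0; rewrite subr0.
have muEO : mu (E `&` `]0, S[%classic) = (k.+1%:R * e)%:E.
  rewrite setIidl // /E bigcup_mkord measure_bigsetU //; last first.
    move=> i j _ _ [x [Bi Bj]].
    have [lij|lji|//] := ltngtP i j.
      by have := far _ _ _ _ lij Bi Bj; rewrite subrr => /(lt_trans T0); rewrite ltxx.
    by have := far _ _ _ _ lji Bj Bi; rewrite subrr => /(lt_trans T0); rewrite ltxx.
  rewrite (eq_bigr (fun=> e%:E)); last by move=> i _; exact: muB.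
  by rewrite sumEFin sumr_const card_ord mulr_natl.
have lb := @lb_indic p S _ E _ p0 mE aO muEO.
apply: lt_le_trans lb; apply: powlt.
- by rewrite mulr_ge0 // ?invr_ge0 ltW.
- rewrite ltr_pdivlMl // mulrCA ltr_pdivrMl //.
  have : 0 < k.+1%:R * T - S by rewrite subr_gt0.
  move: e0; clearbody e; nra.
- by rewrite invr_gt0.
Qed.
End S.
Theorem lemma2p4 (R : realType) (p T S : R) :
  1 <= p -> 0 < T -> T < S -> ~ (exists n : nat, S / T = n%:R) ->
  exists f g : R -> R,
    measurable_fun setT f /\ measurable_fun setT g /\
    (normpV p T f < +oo)%E /\ (normpV p T g < +oo)%E /\
    (normpV p T f < normpV p S f)%E /\ (normpV p S g < normpV p T g)%E.
Proof.
move=> p1 T0 TS nint.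
have p0 : 0 < p by apply: lt_le_trans p1.
have ST0 : 0 <= S / T by rewrite divr_ge0 // ltW // (lt_trans T0 TS).
have /andP[k1 k2] := truncn_itv ST0.
set k := Num.truncn (S / T) in k1 k2.
have k1' : k%:R < S / T.
  rewrite lt_neqAle k1 andbT; apply/negP => /eqP H; apply: nint; by exists k.
rewrite ltr_pdivlMr // in k1'; rewrite ltr_pdivrMr // in k2.
have [E [mE [fin lt]]] := @f_part R p T S k p0 T0 k1' k2.
have [gfin glt] := @g_part R p T S p0 T0 TS.
exists (\1_E), (\1_`[0, T]%classic); split; first exact: measurable_indic.
split; first by apply: measurable_indic; exact: measurable_itv.
by [].
Qed.
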